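(* Fix $h>0$. For a positive integer $N_1$ let $N_t=4N_1$ and $$r_t(x) = \frac{xh}{\pi} \sum_{j=1}^{N_t} \frac{1}{\sqrt{jh}} \cdot \frac{e^{\sqrt{jh}-\sqrt{N_t h/4}}}{e^{2\sqrt{jh}-2\sqrt{N_t h/4}} + x}.$$ Let $p_j = -\exp\!\big(-\sigma(\sqrt{N_1}-\sqrt{j}\,)\big)$, $1\le j\le N_1$, with $\sigma = 2\sqrt{h}$. Then there exist coefficients $a_1,\dots,a_{N_1}$ and a polynomial $b$ of degree $N_2=\mathcal{O}(\sqrt{N_1}\,)$ such that the rational function $r(x)=\sum_{j=1}^{N_1}\frac{a_j}{x-p_j}+b(x)$ satisfies $$|r_t(x)-r(x)| = \mathcal{O}\big(e^{-\sqrt{N_t h/4}}\big)$$ as $N_t\to\infty$, uniformly for $x\in[0,1]$. *)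

(* Defs.v *)
From HB Require Import structures.
From mathcomp Require Import all_boot all_order all_algebra.
From mathcomp Require Import all_classical all_reals all_analysis.
Set Implicit Arguments. Unset Strict Implicit. Unset Printing Implicit Defensive.
Import Order.TTheory GRing.Theory Num.Theory.
Local Open Scope ring_scope.

Definition Nt (N1 : nat) : nat := (4 * N1)%N.

Definition r_t (R : realType) (h : R) (N1 : nat) (x : R) : R :=
  x * h / pi *
  \sum_(1 <= j < (Nt N1).+1)
     ((Num.sqrt (j%:R * h))^-1 *
      (expR (Num.sqrt (j%:R * h) - Num.sqrt ((Nt N1)%:R * h / 4%:R)) /
       (expR (2%:R * Num.sqrt (j%:R * h) - 2%:R * Num.sqrt ((Nt N1)%:R * h / 4%:R)) + x))).

Definition pole (R : realType) (h : R) (N1 j : nat) : R :=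
  - expR (- (2%:R * Num.sqrt h) * (Num.sqrt N1%:R - Num.sqrt j%:R)).

Definition r_approx (R : realType) (h : R) (N1 : nat) (a : nat -> R) (b : {poly R})
  (x : R) : R :=
  \sum_(1 <= j < N1.+1) (a j / (x - pole h N1 j)) + b.[x].

(* Main.v *)
Require Import Defs.
From HB Require Import structures.
From mathcomp Require Import all_boot all_order all_algebra.
From mathcomp Require Import all_classical all_reals all_analysis.
From mathcomp Require Import ring lra.
Import Order.TTheory GRing.Theory Num.Theory.
Local Open Scope ring_scope.

Section Helpers.
Variable R : realType.

Definition Pv (v : R) (n : nat) : {poly R} :=
  1 - \sum_(k < n) ((v / (v + 2^-1) ^+ k.+1 * (-1) ^+ k) *: ('X - (2^-1)%:P) ^+ k).

Lemma Pv_size v n : (size (Pv v n.+1) <= n.+1)%N.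
Proof.
rewrite /Pv; apply: leq_trans (size_polyD _ _) _.
rewrite geq_max size_poly1 /=.
rewrite size_polyN; apply: (big_ind (fun p : {poly R} => (size p <= n.+1)%N)).
- by rewrite size_poly0.
- by move=> p q hp hq; apply: leq_trans (size_polyD _ _) _; rewrite geq_max hp hq.
- move=> k _; apply: leq_trans (size_scale_leq _ _) _.
  by rewrite size_exp_XsubC; exact: ltn_ord.
Qed.

Lemma Pv_err v n x : 1 <= v -> 0 <= x -> x <= 1 ->
  x / (x + v) - (Pv v n).[x] = - v * ((2^-1 - x) / (v + 2^-1)) ^+ n / (x + v).
Proof.
move=> v1 x0 x1.
set w := v + 2^-1; set q := (2^-1 - x) / w.
have w0 : w != 0 by rewrite /w; apply/negP => /eqP; lra.
have xv0 : x + v != 0 by apply/negP => /eqP; lra.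
have q1 : q - 1 != 0.
  rewrite /q; apply/negP => /eqP H.
  have hq : q = 1 by apply/eqP; rewrite -subr_eq0 H.
  have e : 2^-1 - x = w.
    by move: hq; rewrite /q => /(congr1 (fun t => t * w)); rewrite mulfVK // mul1r.
  move: e; rewrite /w; lra.
have Hs : \sum_(k < n) (v / w ^+ k.+1 * (-1) ^+ k) * (x - 2^-1) ^+ k
          = v / w * \sum_(k < n) q ^+ k.
  rewrite mulr_sumr; apply: eq_bigr => k _.
  rewrite /q exprMn exprVn exprSr.
  rewrite -[in LHS]mulrA -exprMn mulN1r opprB.
  have wk : w ^+ k != 0 by rewrite expf_neq0.
  field; by rewrite wk w0.
have Hg : \sum_(k < n) q ^+ k = (q ^+ n - 1) / (q - 1).
  by rewrite subrX1 [(q - 1) * _]mulrC mulfK.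
rewrite /Pv hornerD hornerN hornerC horner_sum.
under eq_bigr do rewrite hornerZ horner_exp hornerXsubC.
rewrite -/w Hs Hg; move: q1; rewrite /q; move: (q ^+ n) => Q q1.
rewrite /w; field.
by apply/and3P; split; apply/negP => /eqP; lra.
Qed.

Lemma Pv_bound u n x : 1 <= u -> 0 <= x -> x <= 1 ->
  `| u * (x / (x + u ^+ 2) - (Pv (u ^+ 2) n.+1).[x]) | <= 3^-1 ^+ n.
Proof.
move=> u1 x0 x1.
have v1 : 1 <= u ^+ 2 by rewrite exprn_ege1.
rewrite Pv_err //.
set v := u ^+ 2 in v1 *; set q := (2^-1 - x) / (v + 2^-1).
have u0 : 0 <= u by lra.
have v0 : 0 <= v by lra.
have xv0 : 0 < x + v by lra.
have E : `|u * (- v * q ^+ n.+1 / (x + v))| = (v / (x + v)) * (u * `|q|) * `|q| ^+ n.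
  have : q = q by []; clearbody q => _.
  rewrite !normrM normrN normfV !normrX (ger0_norm u0) (gtr0_norm xv0).
  rewrite [`|q| ^+ n.+1]exprS /v; ring.
have w0 : 0 < v + 2^-1 by lra.
have hq : `|q| <= 2^-1 / (v + 2^-1).
  rewrite /q normrM normfV (gtr0_norm w0) ler_pM2r ?invr_gt0 //.
  rewrite ler_norml; apply/andP; split; lra.
have hq3 : `|q| <= 3^-1.
  apply: (le_trans hq); rewrite ler_pdivrMr //. lra.
have huq : u * `|q| <= 1.
  apply: le_trans (ler_wpM2l u0 hq) _.
  rewrite mulrA ler_pdivrMr // mul1r /v; nra.
have hv : v / (x + v) <= 1 by rewrite ler_pdivrMr // mul1r; lra.
rewrite E; apply: (@le_trans _ _ (1 * 1 * 3^-1 ^+ n)); last by rewrite !mul1r.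
have hvq : 0 <= v / (x + v) by apply: divr_ge0; lra.
apply: ler_pM.
- by apply: mulr_ge0 => //; apply: mulr_ge0.
- exact: exprn_ge0.
- by apply: ler_pM => //; apply: mulr_ge0.
- by apply: lerXn2r => //; rewrite nnegrE.
Qed.

Lemma sqrt_ge1 (a : R) : 1 <= a -> 1 <= Num.sqrt a.
Proof.
move=> a1; have e := sqr_sqrtr (le_trans ler01 a1).
have y0 := sqrtr_ge0 a.
nra.
Qed.

End Helpers.
Arguments Pv {R}.

Theorem lemma2p2 (R : realType) (h : R) (hpos : 0 < h) :
  exists (C1 C2 : R) (N0 : nat), 0 < C1 /\ 0 < C2 /\
    forall N1 : nat, (0 < N1)%N -> (N0 <= N1)%N ->
      exists (a : nat -> R) (b : {poly R}),
        ((size b).-1)%:R <= C1 * Num.sqrt N1%:R /\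
        forall x : R, 0 <= x -> x <= 1 ->
          `| r_t h N1 x - r_approx h N1 a b x |
            <= C2 * expR (- Num.sqrt ((Nt N1)%:R * h / 4%:R)).
Proof.
have sh0 : 0 < Num.sqrt h by rewrite sqrtr_gt0.
have pi0 : 0 < pi :> R by apply: pi_gt0.
exists (4 * Num.sqrt h + 2), (h / pi / Num.sqrt h * 3 * (4 / h)), 0%N.
split; first lra.
split.
  apply: mulr_gt0; last by apply: divr_gt0.
  apply: mulr_gt0 => //; apply: divr_gt0 => //; exact: divr_gt0.
move=> N1 N1pos _.
pose S := Num.sqrt (N1%:R * h).
pose s (j : nat) := Num.sqrt (j%:R * h).
pose u (j : nat) := expR (s j - S).
pose c (j : nat) := h / pi / s j * u j.
pose M := Num.truncn (2 * S).
pose K := (2 * M.+1)%N.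
have S0 : 0 <= S by apply: sqrtr_ge0.
have hS : Num.sqrt ((Nt N1)%:R * h / 4%:R) = S.
  rewrite /S /Nt natrM; by congr Num.sqrt; field.
exists (fun j : nat => - (c j * u j ^+ 2)) => /=.
exists (\sum_(1 <= j < N1.+1) (c j)%:P
        + \sum_(N1.+1 <= j < (Nt N1).+1) c j *: Pv (u j ^+ 2) K.+1).
split.
  have Hsz : (size (\sum_(1 <= j < N1.+1) (c j)%:P
        + \sum_(N1.+1 <= j < (Nt N1).+1) c j *: Pv (u j ^+ 2) K.+1)%R <= K.+1)%N.
    apply: leq_trans (size_polyD _ _) _; rewrite geq_max; apply/andP; split.
      apply: (big_ind (fun p : {poly R} => (size p <= K.+1)%N)).
      - by rewrite size_poly0.
      - by move=> p q hp hq; apply: leq_trans (size_polyD _ _) _; rewrite geq_max hp hq.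
      - by move=> j _; apply: leq_trans (size_polyC_leq1 _) _.
    apply: (big_ind (fun p : {poly R} => (size p <= K.+1)%N)).
    - by rewrite size_poly0.
    - by move=> p q hp hq; apply: leq_trans (size_polyD _ _) _; rewrite geq_max hp hq.
    - by move=> j _; apply: leq_trans (size_scale_leq _ _) _; exact: Pv_size.
  apply: (@le_trans _ _ K%:R).
    by rewrite ler_nat; move: Hsz; case: size => [|m] //=; rewrite ltnS.
  have hM : M%:R <= 2 * S by rewrite truncn_le; lra.
  have hN : 1 <= Num.sqrt (N1%:R : R).
    by apply: sqrt_ge1; rewrite ler1n.
  have hSe : S = Num.sqrt (N1%:R : R) * Num.sqrt h by rewrite /S sqrtrM ?ler0n.
  rewrite /K natrM -natr1; rewrite hSe in hM; nra.
move=> x x0 x1.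
rewrite hS.
have u0 : forall j, 0 < u j by move=> j; apply: expR_gt0.
have e2 : forall y : R, expR (2 * y) = expR y ^+ 2.
  by move=> y; rewrite expr2 -expRD; congr expR; ring.
have Hrt : r_t h N1 x = \sum_(1 <= j < (Nt N1).+1) c j * (x / (x + u j ^+ 2)).
  rewrite /r_t hS mulr_sumr; apply: eq_bigr => j _.
  rewrite -mulrBr e2 -/(s j) -/(u j) /c.
  rewrite [u j ^+ 2 + x]addrC; ring.
have Hpole : forall j, pole h N1 j = - u j ^+ 2.
  move=> j; rewrite /pole /u /s /S -e2 !sqrtrM ?ler0n //.
  by congr (- expR _); ring.
have key : r_t h N1 x - r_approx h N1 (fun j => - (c j * u j ^+ 2))
    (\sum_(1 <= j < N1.+1) (c j)%:P
        + \sum_(N1.+1 <= j < (Nt N1).+1) c j *: Pv (u j ^+ 2) K.+1) x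
    = \sum_(N1.+1 <= j < (Nt N1).+1)
        c j * (x / (x + u j ^+ 2) - (Pv (u j ^+ 2) K.+1).[x]).
  rewrite Hrt /r_approx hornerD !horner_sum.
  under [X in _ - (X + _)]eq_bigr do rewrite Hpole opprK.
  under [X in _ - (_ + (X + _))]eq_bigr do rewrite hornerC.
  under [X in _ - (_ + (_ + X))]eq_bigr do rewrite hornerZ.
  under [RHS]eq_bigr do rewrite mulrBr.
  rewrite sumrB (big_cat_nat _ (n := N1.+1)) //=; last by rewrite ltnS /Nt leq_pmull.
  set A1 := \sum_(1 <= j < N1.+1) _.
  set B1 := \sum_(1 <= j < N1.+1) _.
  set C1 := \sum_(1 <= j < N1.+1) _.
  have -> : A1 = B1 + C1.
    rewrite /A1 /B1 /C1 -big_split; apply: eq_bigr => j _ /=.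
    have hne : x + u j ^+ 2 != 0.
      by apply/negP => /eqP he; have uj := u0 j; nra.
    by field.
  by rewrite [B1 + (C1 + _)]addrA opprD addrA [B1 + C1 + _]addrC addrK.
rewrite key.
apply: le_trans (ler_norm_sum _ _ _) _.
set A := h / pi / Num.sqrt h.
pose T : R := 3^-1 ^+ K.
have A0 : 0 < A by apply: divr_gt0 => //; apply: divr_gt0.
have Hb : \sum_(N1.+1 <= i < (Nt N1).+1)
     `|c i * (x / (x + u i ^+ 2) - (Pv (u i ^+ 2) K.+1).[x])| <=
     \sum_(N1.+1 <= j < (Nt N1).+1) (A * T).
  apply: ler_sum_nat => j /andP[hj _].
  have j1 : 1 <= j%:R :> R by rewrite ler1n (leq_trans _ hj).
  have jN : N1%:R <= j%:R :> R by rewrite ler_nat ltnW.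
  have sj : Num.sqrt h <= s j by rewrite /s; apply: ler_wsqrtr; nra.
  have sj0 : 0 < s j by apply: lt_le_trans sj.
  have Sj : S <= s j by rewrite /s /S; apply: ler_wsqrtr; nra.
  have uj1 : 1 <= u j by rewrite /u; apply: le_trans (expR_ge1Dx _); lra.
  rewrite /c -mulrA normrM (@ger0_norm _ (h / pi / s j)); last first.
    by apply: divr_ge0; [apply: divr_ge0; lra | lra].
  apply: ler_pM.
  - by apply: divr_ge0; [apply: divr_ge0; lra | lra].
  - exact: normr_ge0.
  - rewrite /A; apply: ler_wpM2l; first by apply: divr_ge0; lra.
    by rewrite lef_pV2 ?posrE.
  - exact: Pv_bound.
apply: le_trans Hb _.
rewrite sumr_const_nat.
have -> : ((Nt N1).+1 - N1.+1)%N = (3 * N1)%N.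
  by rewrite subSS /Nt -{2}(mul1n N1) -mulnBl.
set E := expR (- S).
have E0 : 0 < E by apply: expR_gt0.
have hT : T <= E * E.
  have em1 : 4^-1 <= expR (-1) :> R.
    have -> : expR (-1) = expR (- 2^-1) ^+ 2 :> R.
      by rewrite -e2; congr expR; field.
    have := expR_ge1Dx (- 2^-1 : R); nra.
  rewrite /T /K exprM.
  apply: (@le_trans _ _ (4^-1 ^+ M.+1)).
    apply: lerXn2r; rewrite ?nnegrE ?expr2; lra.
  apply: (@le_trans _ _ (expR (-1) ^+ M.+1)).
    by apply: lerXn2r; rewrite ?nnegrE; lra.
  rewrite -expRM_natl /E -expRD ler_expR.
  have := truncnS_gt (2 * S); rewrite -/M; lra.
have hNE : N1%:R * (E * E) <= 4 / h * E.
  have eS : S ^+ 2 = N1%:R * h by rewrite /S sqr_sqrtr // mulr_ge0 // ?ler0n; lra.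
  have hF : S ^+ 2 <= 4 * expR S.
    have -> : expR S = expR (S / 2) ^+ 2 by rewrite -e2; congr expR; field.
    have := expR_ge1Dx (S / 2); nra.
  have hN1 : N1%:R = S ^+ 2 / h by rewrite eS mulfK //; lra.
  have eE : expR S * E = 1 by rewrite /E expRN mulfV // gt_eqF // expR_gt0.
  rewrite hN1.
  have -> : S ^+ 2 / h * (E * E) = (S ^+ 2 * E) * (h^-1 * E) by ring.
  have -> : 4 / h * E = 4 * (h^-1 * E) by ring.
  apply: ler_wpM2r; first by apply: mulr_ge0; [rewrite invr_ge0; lra | lra].
  apply: (@le_trans _ _ (4 * expR S * E)); first by apply: ler_wpM2r; lra.
  by rewrite -mulrA eE mulr1.
rewrite -[A * T *+ _]mulr_natr natrM.
have -> : A * T * (3%:R * N1%:R) = A * 3 * (T * N1%:R) by ring.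
have -> : A * 3 * (4 / h) * E = A * 3 * (4 / h * E) by ring.
apply: ler_wpM2l; first lra.
apply: le_trans hNE; rewrite mulrC; apply: ler_wpM2l; [exact: ler0n | exact: hT].
Qed.
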